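(* Assume (A2). Let $\{\alpha_k\},\{\beta_k\}$ be nonnegative, nonincreasing step sizes and $\mathcal K^*$ as in the context. Then for all $k\ge\mathcal K^*$, $$\left\|\begin{bmatrix}\epsilon_k\\ \psi_k\end{bmatrix}\right\|\le\frac{8\lambda_1+1}{2\lambda_1}\|\hat Z_k\|+\frac{(8\lambda_1+1)(2B+\|Y^*\|)}{2\lambda_1^2}.$$
   Context: Let $n\ge1$; $\|\cdot\|$ is the Euclidean norm / spectral norm. Let $\{\xi_k\}_{k\ge0}$ be a Markov chain with state space $\mathcal S$, and for $i,j\in\{1,2\}$ let $A_{ij}(\xi)\in\mathbb R^{n\times n}$, $b_i(\xi)\in\mathbb R^n$. The linear two-time-scale stochastic approximation, from arbitrary $X_0,Y_0$, is $X_{k+1}=X_k-\alpha_k(A_{11}(\xi_k)X_k+A_{12}(\xi_k)Y_k-b_1(\xi_k))$, $Y_{k+1}=Y_k-\beta_k(A_{21}(\xi_k)X_k+A_{22}(\xi_k)Y_k-b_2(\xi_k))$. Standing setting: the limits $\bar A_{ij}=\lim_k\mathbb E[A_{ij}(\xi_k)]$, $\bar b_i=\lim_k\mathbb E[b_i(\xi_k)]$ exist; $\bar A_{11}$ and $\Delta=\bar A_{22}-\bar A_{21}\bar A_{11}^{-1}\bar A_{12}$ satisfy $x^T\bar A_{11}x>0$, $x^T\Delta x>0$ for $x\neq0$; for $\alpha>0$, $\tau(\alpha)$ is a mixing time: $\|\mathbb E[A_{ij}(\xi_k)\mid\xi_0=\xi]-\bar A_{ij}\|\le\alpha$, $\|\mathbb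 E[b_i(\xi_k)\mid\xi_0=\xi]-\bar b_i\|\le\alpha$ for all $i,j,\xi$, $k\ge\tau(\alpha)$, with $\tau(\alpha)=C\log(1/\alpha)$. (A2): there is $B>0$ with $\|b_i(\xi)\|\le B$ and $\|A_{ij}(\xi)\|\le1/4$ for all $i,j,\xi$. Notation: $(X^*,Y^* )$ solves $\bar A_{11}X^*+\bar A_{12}Y^*=\bar b_1$, $\bar A_{21}X^*+\bar A_{22}Y^*=\bar b_2$; $\hat X_k=X_k-\bar A_{11}^{-1}(\bar b_1-\bar A_{12}Y_k)$, $\hat Y_k=Y_k-Y^*$, $\hat Z_k=[\hat X_k^T,\hat Y_k^T]^T$; $\lambda_1$ is the smallest singular value of $\bar A_{11}$. Noise: $\epsilon_k=A_{11}(\xi_k)X_k+A_{12}(\xi_k)Y_k-b_1(\xi_k)-(\bar A_{11}X_k+\bar A_{12}Y_k-\bar b_1)$ and $\psi_k=A_{21}(\xi_k)X_k+A_{22}(\xi_k)Y_k-b_2(\xi_k)-(\bar A_{21}X_k+\bar A_{22}Y_k-\bar b_2)$. $\mathcal K^*$ is a positive integer with $\sum_{t=k-\tau(\alpha_k)}^{k}\alpha_t\le\tau(\alpha_k)\alpha_{k-\tau(\alpha_k)}\le\log2$ for all $k\ge\mathcal K^*$. *)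

(* Defs.v *)
From HB Require Import structures.
From mathcomp Require Import all_boot all_order all_algebra.
From mathcomp Require Import all_classical all_reals all_analysis.

Set Implicit Arguments.
Unset Strict Implicit.
Unset Printing Implicit Defensive.
Import Order.TTheory GRing.Theory Num.Theory.
Import numFieldNormedType.Exports.
Local Open Scope classical_set_scope.
Local Open Scope ring_scope.

Section Defs.
Variable R : realType.

Definition vnorm (m : nat) (v : 'cV[R]_m) : R :=
  Num.sqrt (\sum_(i < m) (v i 0) ^+ 2).

Definition opnorm (m p : nat) (A : 'M[R]_(m, p)) : R :=
  sup [set vnorm (A *m x) | x in [set x : 'cV[R]_p | vnorm x <= 1]].

Definition smallest_sv (n : nat) (A : 'M[R]_n) : R :=
  inf [set vnorm (A *m x) | x in [set x : 'cV[R]_n | vnorm x = 1]].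

Definition mexpect d (S : measurableType d) (mu : {measure set S -> \bar R})
  (m p : nat) (F : S -> 'M[R]_(m, p)) : 'M[R]_(m, p) :=
  \matrix_(i, j) (\int[mu]_(s in setT) F s i j).

Fixpoint tts_iter (S : Type) (n : nat)
  (A11 A12 A21 A22 : S -> 'M[R]_n) (b1 b2 : S -> 'cV[R]_n)
  (alpha beta : nat -> R) (xi : nat -> S) (X0 Y0 : 'cV[R]_n) (k : nat)
  : 'cV[R]_n * 'cV[R]_n :=
  match k with
  | 0%N => (X0, Y0)
  | k'.+1 =>
    let XY := tts_iter A11 A12 A21 A22 b1 b2 alpha beta xi X0 Y0 k' in
    let X := XY.1 in let Y := XY.2 in
    (X - alpha k' *: (A11 (xi k') *m X + A12 (xi k') *m Y - b1 (xi k')),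
     Y - beta k' *: (A21 (xi k') *m X + A22 (xi k') *m Y - b2 (xi k')))
  end.

End Defs.

(* Main.v *)
Require Import Defs.
From HB Require Import structures.
From mathcomp Require Import all_boot all_order all_algebra.
From mathcomp Require Import all_classical all_reals all_analysis.
From mathcomp Require Import ring lra.
Import Order.TTheory GRing.Theory Num.Theory.
Import numFieldNormedType.Exports.
Local Open Scope classical_set_scope.
Local Open Scope ring_scope.
Section Vec.
Set Implicit Arguments.
Context {R : realType}.

Lemma cs_sum m (f g : 'I_m -> R) :
  \sum_i f i * g i <= Num.sqrt (\sum_i f i ^+ 2) * Num.sqrt (\sum_i g i ^+ 2).
Proof.
have f0 : 0 <= \sum_i f i ^+ 2 by apply: sumr_ge0 => i _; exact: sqr_ge0.
have g0 : 0 <= \sum_i g i ^+ 2 by apply: sumr_ge0 => i _; exact: sqr_ge0.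
have p2 := sqr_sqrtr f0; have q2 := sqr_sqrtr g0.
set p := Num.sqrt _ in p2 *; set q := Num.sqrt _ in q2 *.
have p0 : 0 <= p by exact: sqrtr_ge0.
have q0 : 0 <= q by exact: sqrtr_ge0.
have [pq0|pqpos] := eqVneq (p * q) 0.
  move: pq0 => /eqP; rewrite mulf_eq0 => /orP[] /eqP.
  - move/eqP; rewrite sqrtr_eq0 => hf.
    have hf0 : \sum_i f i ^+ 2 = 0 by apply/le_anti; rewrite hf f0.
    rewrite big1 => [|i _]; first exact: mulr_ge0.
    have := psumr_eq0P (fun i _ => sqr_ge0 (f i)) hf0 (i:=i) isT.
    by move/eqP; rewrite sqrf_eq0 => /eqP ->; rewrite mul0r.
  - move/eqP; rewrite sqrtr_eq0 => hg.
    have hg0 : \sum_i g i ^+ 2 = 0 by apply/le_anti; rewrite hg g0.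
    rewrite big1 => [|i _]; first exact: mulr_ge0.
    have := psumr_eq0P (fun i _ => sqr_ge0 (g i)) hg0 (i:=i) isT.
    by move/eqP; rewrite sqrf_eq0 => /eqP ->; rewrite mulr0.
have hpq : 0 < p * q by rewrite lt_def pqpos (mulr_ge0 p0 q0).
have key : 2 * (p * q) * \sum_i f i * g i <= 2 * (p * q) * (p * q).
  have -> : 2 * (p * q) * (p * q) = q ^+ 2 * p ^+ 2 + p ^+ 2 * q ^+ 2.
    by rewrite mulr2n; ring.
  rewrite [X in _ <= _ * X + _]p2 [X in _ <= _ + _ * X]q2.
  rewrite mulr_sumr !mulr_sumr -big_split /=.
  apply: ler_sum => i _; rewrite -subr_ge0.
  have -> : q ^+ 2 * f i ^+ 2 + p ^+ 2 * g i ^+ 2 - 2 * (p * q) * (f i * g i)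
     = (q * f i - p * g i) ^+ 2 by rewrite mulr2n; ring.
  exact: sqr_ge0.
by rewrite -(ler_pM2l (_ : 0 < 2 * (p * q))) // mulr_gt0.
Qed.

Lemma cs_sqr m (f g : 'I_m -> R) :
  (\sum_i f i * g i) ^+ 2 <= (\sum_i f i ^+ 2) * (\sum_i g i ^+ 2).
Proof.
have f0 : 0 <= \sum_i f i ^+ 2 by apply: sumr_ge0 => i _; exact: sqr_ge0.
have g0 : 0 <= \sum_i g i ^+ 2 by apply: sumr_ge0 => i _; exact: sqr_ge0.
have h1 := cs_sum f g.
have h2 := cs_sum (fun i => - f i) g.
have e1 : \sum_i (- f i) * g i = - \sum_i f i * g i.
  by rewrite -sumrN; apply: eq_bigr => i _; rewrite mulNr.
have e2 : \sum_i (- f i) ^+ 2 = \sum_i f i ^+ 2.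
  by apply: eq_bigr => i _; rewrite sqrrN.
rewrite e1 e2 in h2.
have p2 := sqr_sqrtr f0; have q2 := sqr_sqrtr g0.
have p0 := sqrtr_ge0 (\sum_i f i ^+ 2); have q0 := sqrtr_ge0 (\sum_i g i ^+ 2).
rewrite -p2 -q2 -exprMn.
set S := \sum_i f i * g i in h1 h2 *.
set P := _ * _ in h1 h2 *.
have P0 : 0 <= P by exact: mulr_ge0.
nra.
Qed.

Definition sqn m (v : 'cV[R]_m) := \sum_i (v i 0) ^+ 2.

Lemma sqn_ge0 m (v : 'cV[R]_m) : 0 <= sqn v.
Proof. by apply: sumr_ge0 => i _; exact: sqr_ge0. Qed.

Lemma vnorm_ge0 m (v : 'cV[R]_m) : 0 <= vnorm v.
Proof. exact: sqrtr_ge0. Qed.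

Lemma vnorm_sqr m (v : 'cV[R]_m) : vnorm v ^+ 2 = sqn v.
Proof. exact/sqr_sqrtr/sqn_ge0. Qed.

Lemma vnorm_le m (v : 'cV[R]_m) c : 0 <= c -> sqn v <= c ^+ 2 -> vnorm v <= c.
Proof.
move=> c0 h; rewrite /vnorm -(ger0_norm c0) -sqrtr_sqr ler_sqrt //.
exact: sqr_ge0.
Qed.

Lemma dot_le m (u v : 'cV[R]_m) : \sum_i u i 0 * v i 0 <= vnorm u * vnorm v.
Proof. exact: cs_sum. Qed.

Lemma vnormD m (u v : 'cV[R]_m) : vnorm (u + v) <= vnorm u + vnorm v.
Proof.
apply: vnorm_le; first by rewrite addr_ge0 ?vnorm_ge0.
have -> : sqn (u + v) = sqn u + 2 * \sum_i u i 0 * v i 0 + sqn v.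
  rewrite /sqn mulr_sumr -!big_split /=; apply: eq_bigr => i _.
  by rewrite !mxE mulr2n; ring.
have := dot_le u v; rewrite -!vnorm_sqr => h.
set a := vnorm u in h *; set b := vnorm v in h *.
nra.
Qed.

Lemma vnormZ m a (v : 'cV[R]_m) : vnorm (a *: v) = `|a| * vnorm v.
Proof.
rewrite /vnorm -sqrtr_sqr -sqrtrM ?sqr_ge0 // mulr_sumr; congr Num.sqrt.
by apply: eq_bigr => i _; rewrite !mxE exprMn.
Qed.

Lemma vnorm0 m : vnorm (0 : 'cV[R]_m) = 0.
Proof. by rewrite -(scale0r (0 : 'cV[R]_m)) vnormZ normr0 mul0r. Qed.

Lemma vnormN m (v : 'cV[R]_m) : vnorm (- v) = vnorm v.
Proof. by rewrite -scaleN1r vnormZ normrN normr1 mul1r. Qed.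

Lemma vnormB m (u v : 'cV[R]_m) : vnorm (u - v) <= vnorm u + vnorm v.
Proof. by rewrite -(vnormN v) vnormD. Qed.

Lemma vnorm_eq0 m (v : 'cV[R]_m) : vnorm v = 0 -> v = 0.
Proof.
move=> h; have : sqn v = 0 by rewrite -vnorm_sqr h expr0n.
move=> hs; apply/matrixP => i j; rewrite (ord1 j) mxE.
have := psumr_eq0P (fun i _ => sqr_ge0 (v i 0)) hs (i:=i) isT.
by move/eqP; rewrite sqrf_eq0 => /eqP.
Qed.

Lemma vnorm_col_sqr m (a b : 'cV[R]_m) :
  vnorm (col_mx a b) ^+ 2 = vnorm a ^+ 2 + vnorm b ^+ 2.
Proof.
rewrite !vnorm_sqr /sqn big_split_ord /=.
by congr (_ + _); apply: eq_bigr => i _; rewrite ?col_mxEu ?col_mxEd.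
Qed.

Lemma vnorm_colu m (a b : 'cV[R]_m) : vnorm a <= vnorm (col_mx a b).
Proof.
have := vnorm_col_sqr a b; have := vnorm_ge0 a; have := vnorm_ge0 b.
have := vnorm_ge0 (col_mx a b); nra.
Qed.

Lemma vnorm_cold m (a b : 'cV[R]_m) : vnorm b <= vnorm (col_mx a b).
Proof.
have := vnorm_col_sqr a b; have := vnorm_ge0 a; have := vnorm_ge0 b.
have := vnorm_ge0 (col_mx a b); nra.
Qed.

Lemma vnorm_col_le m (a b : 'cV[R]_m) : vnorm (col_mx a b) <= vnorm a + vnorm b.
Proof.
have := vnorm_col_sqr a b; have := vnorm_ge0 a; have := vnorm_ge0 b.
have := vnorm_ge0 (col_mx a b); nra.
Qed.

Definition frob m p (M : 'M[R]_(m, p)) := Num.sqrt (\sum_i \sum_j M i j ^+ 2).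

Lemma frob_ge0 m p (M : 'M[R]_(m, p)) : 0 <= frob M.
Proof. exact: sqrtr_ge0. Qed.

Lemma vnorm_frob m p (M : 'M[R]_(m, p)) x : vnorm (M *m x) <= frob M * vnorm x.
Proof.
apply: vnorm_le; first by rewrite mulr_ge0 ?frob_ge0 ?vnorm_ge0.
rewrite exprMn vnorm_sqr /frob sqr_sqrtr; last first.
  by apply: sumr_ge0 => i _; apply: sumr_ge0 => j _; exact: sqr_ge0.
rewrite /sqn mulr_suml; apply: ler_sum => i _; rewrite mxE.
exact: (cs_sqr (fun j => M i j) (fun j => x j 0)).
Qed.

Lemma opnorm_ub m p (M : 'M[R]_(m, p)) x : vnorm x <= 1 -> vnorm (M *m x) <= opnorm M.
Proof.
move=> hx; apply: ub_le_sup; last by exists x.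
exists (frob M) => _ [y hy <-]; apply: (le_trans (vnorm_frob M y)).
by rewrite -[X in _ <= X]mulr1 ler_wpM2l ?frob_ge0.
Qed.

Lemma opnorm_mul m p (M : 'M[R]_(m, p)) x : vnorm (M *m x) <= opnorm M * vnorm x.
Proof.
have [x0|xn0] := eqVneq (vnorm x) 0.
  by move/vnorm_eq0: x0 => ->; rewrite mulmx0 !vnorm0 mulr0.
have xp : 0 < vnorm x by rewrite lt_def xn0 vnorm_ge0.
have := @opnorm_ub _ _ M ((vnorm x)^-1 *: x).
rewrite vnormZ ger0_norm ?invr_ge0 ?vnorm_ge0 // mulVf // lexx => /(_ isT).
rewrite -scalemxAr vnormZ ger0_norm ?invr_ge0 ?vnorm_ge0 //.
by rewrite ler_pdivrMl // mulrC.
Qed.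


Lemma inj_unitmx m (A : 'M[R]_m) : (forall x : 'cV[R]_m, A *m x = 0 -> x = 0) -> A \in unitmx.
Proof.
move=> h; rewrite -unitmx_tr -row_free_unit -kermx_eq0.
apply/negPn/negP => /rowV0Pn [v /sub_kermxP hv vn0].
have : A *m v^T = 0 by rewrite -[A]trmxK -trmx_mul hv trmx0.
move/h => /(congr1 trmx); rewrite trmxK trmx0 => v0.
by move: vn0; rewrite v0 eqxx.
Qed.

Lemma sv_set_lb m (A : 'M[R]_m) :
  has_lbound [set vnorm (A *m x) | x in [set x : 'cV[R]_m | vnorm x = 1]].
Proof. by exists 0 => _ [y _ <-]; exact: vnorm_ge0. Qed.

Lemma sv_le m (A : 'M[R]_m) e : vnorm e = 1 -> smallest_sv A <= vnorm (A *m e).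
Proof. by move=> he; apply: (ge_inf (sv_set_lb A)); exists e. Qed.

Lemma sv_lb m (A : 'M[R]_m) x : smallest_sv A * vnorm x <= vnorm (A *m x).
Proof.
have [x0|xn0] := eqVneq (vnorm x) 0.
  by rewrite x0 mulr0 vnorm_ge0.
have xp : 0 < vnorm x by rewrite lt_def xn0 vnorm_ge0.
have := @sv_le _ A ((vnorm x)^-1 *: x).
rewrite vnormZ ger0_norm ?invr_ge0 ?vnorm_ge0 // mulVf // => /(_ erefl).
rewrite -scalemxAr vnormZ ger0_norm ?invr_ge0 ?vnorm_ge0 //.
by rewrite ler_pdivlMl // mulrC.
Qed.

Lemma sv_pos m (A : 'M[R]_m) (e : 'cV[R]_m) : vnorm e = 1 -> A \in unitmx -> 0 < smallest_sv A.
Proof.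
move=> he hA.
have key x : vnorm x = 1 -> 1 <= frob (invmx A) * vnorm (A *m x).
  move=> hx; rewrite -hx -[X in vnorm X](mulKmx hA x).
  exact: vnorm_frob.
have Fp : 0 < frob (invmx A).
  have := key e he; rewrite lt_def frob_ge0 andbT.
  by apply: contraTN => /eqP ->; rewrite mul0r ler10.
apply: (@lt_le_trans _ _ (frob (invmx A))^-1); first by rewrite invr_gt0.
apply: lb_le_inf; first by exists (vnorm (A *m e)); exists e.
move=> _ [y hy <-]; rewrite -(ler_pM2l Fp) mulfV ?gt_eqF //; exact: key.
Qed.

End Vec.

Section Vec2.
Context {R : realType}.

Lemma vnorm_entry m (v : 'cV[R]_m) i : `|v i 0| <= vnorm v.
Proof.
rewrite -sqrtr_sqr ler_sqrt ?sqn_ge0 //.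
rewrite /sqn (bigD1 i) //= lerDl; apply: sumr_ge0 => j _; exact: sqr_ge0.
Qed.

Lemma vnorm_delta m (j : 'I_m) : vnorm (delta_mx j 0 : 'cV[R]_m) = 1.
Proof.
rewrite /vnorm (bigD1 j) //= big1 ?addr0.
  by rewrite !mxE !eqxx /= expr1n sqrtr1.
by move=> k /negbTE hk; rewrite !mxE hk /= expr0n.
Qed.

Lemma entry_opnorm m p (M : 'M[R]_(m, p)) i j : `|M i j| <= opnorm M.
Proof.
have -> : M i j = (M *m (delta_mx j 0 : 'cV[R]_p)) i 0.
  rewrite mxE (bigD1 j) //= big1 => [|k /negbTE hk].
    by rewrite !mxE !eqxx mulr1 addr0.
  by rewrite !mxE hk mulr0.
apply: (le_trans (vnorm_entry _ _)); apply: opnorm_ub.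
by rewrite vnorm_delta.
Qed.

Lemma entry_vnorm m (v : 'cV[R]_m) i j : `|v i j| <= vnorm v.
Proof. by rewrite (ord1 j); exact: vnorm_entry. Qed.

End Vec2.

Section Expect.
Set Implicit Arguments.
Variables (d : measure_display) (S : measurableType d) (R : realType).
Variable mu : {measure set S -> \bar R}.
Hypothesis mu1 : mu setT = 1%E.

Lemma bdd_int (f : S -> R) K : measurable_fun setT f -> (forall s, `|f s| <= K) ->
  mu.-integrable setT (EFin \o f).
Proof.
move=> mf hK; apply: measurable_bounded_integrable => //.
  by rewrite mu1 ltry.
exists K; split; first exact: num_real.
move=> M hM x _ /=; exact: le_trans (hK x) (ltW hM).
Qed.

Lemma Rint_sum (I : Type) (r : seq I) (h : I -> S -> R) :
  (forall i, mu.-integrable setT (EFin \o h i)) ->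
  \int[mu]_(s in setT) (\sum_(i <- r) h i s) = \sum_(i <- r) \int[mu]_(s in setT) h i s
  /\ mu.-integrable setT (EFin \o (fun s => \sum_(i <- r) h i s)).
Proof.
move=> hi; elim: r => [|a r [IH1 IH2]].
  rewrite big_nil; under eq_Rintegral do rewrite big_nil.
  rewrite Rintegral_cst // mul0r; split => //.
  have -> : (fun s => \sum_(i <- [::]) h i s) = cst 0.
    by apply/funext => s; rewrite big_nil.
  apply: (@bdd_int _ 0); first exact: measurable_cst.
  by move=> s; rewrite normr0.
rewrite big_cons; under eq_Rintegral do rewrite big_cons.
rewrite RintegralD // IH1; split => //.
have -> : (EFin \o (fun s => \sum_(i <- a :: r) h i s)) =
   ((EFin \o h a) \+ (EFin \o (fun s => (\sum_(i <- r) h i s)%R)))%E.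
  by apply/funext => s /=; rewrite big_cons.
exact: integrableD.
Qed.


Lemma int_scale (a : R) (f : S -> R) : mu.-integrable setT (EFin \o f) ->
  mu.-integrable setT (EFin \o (fun s => a * f s)).
Proof.
move=> hf; have := integrableZl measurableT a hf.
by congr (_.-integrable _ _); apply/funext => s /=; rewrite EFinM.
Qed.

Lemma int_scaler (a : R) (f : S -> R) : mu.-integrable setT (EFin \o f) ->
  mu.-integrable setT (EFin \o (fun s => f s * a)).
Proof.
move=> hf; have := int_scale a hf.
by congr (_.-integrable _ _); apply/funext => s /=; rewrite mulrC.
Qed.

Lemma expect_bound m p (F : S -> 'M[R]_(m, p)) (x : 'cV[R]_p) K c :
  (forall i j, measurable_fun setT (fun s => F s i j)) ->
  (forall s i j, `|F s i j| <= K) ->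
  0 <= c -> (forall s, vnorm (F s *m x) <= c) ->
  vnorm (mexpect mu F *m x) <= c.
Proof.
move=> mF bF c0 hc.
pose h i s := (F s *m x) i 0.
have mh i : measurable_fun setT (h i).
  rewrite /h; under eq_fun do rewrite mxE.
  apply: measurable_sum => j; apply: measurable_realfun.measurable_funM => //; exact: measurable_cst.
have ih i : mu.-integrable setT (EFin \o h i).
  apply: (bdd_int c (mh i)) => s; rewrite /h.
  exact: le_trans (vnorm_entry (F s *m x) i) (hc s).
have iF i j : mu.-integrable setT (EFin \o (fun s => F s i j)).
  exact: (bdd_int _ (mF i j) (fun s => bF s i j)).
have hv i : (mexpect mu F *m x) i 0 = \int[mu]_(s in setT) h i s.
  rewrite mxE /h; under eq_Rintegral do rewrite mxE.
  rewrite (Rint_sum _ (fun j s => F s i j * x j 0) _).1; last first.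
    by move=> j; exact: int_scaler.
  apply: eq_bigr => j _; rewrite mxE RintegralZr //.
set v := mexpect mu F *m x.
have hs : sqn v <= vnorm v * c.
  have -> : sqn v = \int[mu]_(s in setT) (\sum_i v i 0 * h i s).
    rewrite (Rint_sum _ (fun i s => v i 0 * h i s) _).1; last first.
      by move=> i; exact: int_scale.
    apply: eq_bigr => i _; rewrite RintegralZl // -hv expr2 //.
  have -> : vnorm v * c = \int[mu]_(s in setT) (vnorm v * c).
    by rewrite Rintegral_cst // mu1 /= mulr1.
  apply: le_Rintegral => //.
  - exact: (Rint_sum _ (fun i s => v i 0 * h i s) (fun i => int_scale _ (ih i))).2.
  - apply: (@bdd_int _ `|vnorm v * c|) => //; exact: measurable_cst.
  move=> s _; apply: le_trans (dot_le _ _) _.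
  by rewrite ler_wpM2l ?vnorm_ge0.
have := vnorm_sqr v; have := vnorm_ge0 v; nra.
Qed.

End Expect.

Section Approx.
Context {R : realType}.

Lemma approx_mat m p (Ab : 'M[R]_(m, p)) y c :
  (forall a, 0 < a -> exists E : 'M[R]_(m, p), vnorm (E *m y) <= c /\ opnorm (E - Ab) <= a) ->
  vnorm (Ab *m y) <= c.
Proof.
move=> h; apply/ler_addgt0Pr => e e0.
have hy : 0 < vnorm y + 1 by rewrite ltr_wpDl ?vnorm_ge0.
have [E [h1 h2]] := h (e / (vnorm y + 1)) (divr_gt0 e0 hy).
have -> : Ab *m y = E *m y - (E - Ab) *m y by rewrite mulmxBl opprB addrC subrK.
apply: le_trans (vnormB _ _) _; apply: lerD => //.
apply: le_trans (opnorm_mul _ _) _.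
apply: (@le_trans _ _ (e / (vnorm y + 1) * vnorm y)).
  by rewrite ler_wpM2r ?vnorm_ge0.
rewrite mulrAC ler_pdivrMr // ler_pM2l //; first by rewrite lerDl.
Qed.

Lemma approx_vec m (bb : 'cV[R]_m) c :
  (forall a, 0 < a -> exists e : 'cV[R]_m, vnorm e <= c /\ vnorm (e - bb) <= a) ->
  vnorm bb <= c.
Proof.
move=> h; apply/ler_addgt0Pr => a a0.
have [e [h1 h2]] := h a a0.
have -> : bb = e - (e - bb) by rewrite opprB addrC subrK.
by apply: le_trans (vnormB _ _) _; apply: lerD.
Qed.

End Approx.

Theorem lemma7 (R : realType) (n : nat) (d : measure_display)
  (S : measurableType d)
  (* Markov chain: one-step kernel P, k-step kernels Pn, initial law mu0,
     marginal laws law k of xi_k *)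
  (P : R.-pker S ~> S) (Pn : nat -> R.-pker S ~> S)
  (mu0 : probability S R) (law : nat -> probability S R)
  (A11 A12 A21 A22 : S -> 'M[R]_n) (b1 b2 : S -> 'cV[R]_n)
  (Abar11 Abar12 Abar21 Abar22 : 'M[R]_n) (bbar1 bbar2 : 'cV[R]_n)
  (tau : R -> nat) (C : R) (B : R)
  (alpha beta : nat -> R) (Kstar : nat)
  (Xstar Ystar : 'cV[R]_n) (X0 Y0 : 'cV[R]_n) (xi : nat -> S) :
  (0 < n)%N ->
  (* chain structure *)
  (forall x (E : set S), measurable E -> Pn 0%N x E = \d_x E) ->
  (forall k x (E : set S), measurable E ->
     Pn k.+1 x E = (\int[P x]_y Pn k y E)%E) ->
  (forall k (E : set S), measurable E ->
     law k E = (\int[mu0]_x Pn k x E)%E) ->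
  (* measurability of the data *)
  (forall i j, measurable_fun setT (fun s => A11 s i j)) ->
  (forall i j, measurable_fun setT (fun s => A12 s i j)) ->
  (forall i j, measurable_fun setT (fun s => A21 s i j)) ->
  (forall i j, measurable_fun setT (fun s => A22 s i j)) ->
  (forall i j, measurable_fun setT (fun s => b1 s i j)) ->
  (forall i j, measurable_fun setT (fun s => b2 s i j)) ->
  (* the limits Abar_ij = lim E[A_ij(xi_k)], bbar_i = lim E[b_i(xi_k)] *)
  (forall i j, (fun k => mexpect (law k) A11 i j) @ \oo --> Abar11 i j) ->
  (forall i j, (fun k => mexpect (law k) A12 i j) @ \oo --> Abar12 i j) ->
  (forall i j, (fun k => mexpect (law k) A21 i j) @ \oo --> Abar21 i j) ->
  (forall i j, (fun k => mexpect (law k) A22 i j) @ \oo --> Abar22 i j) ->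
  (forall i j, (fun k => mexpect (law k) b1 i j) @ \oo --> bbar1 i j) ->
  (forall i j, (fun k => mexpect (law k) b2 i j) @ \oo --> bbar2 i j) ->
  (* positive definiteness of Abar11 and of the Schur complement Delta *)
  (forall x : 'cV[R]_n, x != 0 -> 0 < (x^T *m Abar11 *m x) 0 0) ->
  (forall x : 'cV[R]_n, x != 0 ->
     0 < (x^T *m (Abar22 - Abar21 *m invmx Abar11 *m Abar12) *m x) 0 0) ->
  (* mixing time tau(a) = C log(1/a) (rounded up to an integer) *)
  0 < C ->
  (forall a, 0 < a < 1 -> ((tau a)%:R : R) = (Num.ceil (C * ln a^-1))%:~R) ->
  (forall a, 0 < a -> forall k x, (tau a <= k)%N ->
     [/\ opnorm (mexpect (Pn k x) A11 - Abar11) <= a,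
         opnorm (mexpect (Pn k x) A12 - Abar12) <= a,
         opnorm (mexpect (Pn k x) A21 - Abar21) <= a,
         opnorm (mexpect (Pn k x) A22 - Abar22) <= a &
         vnorm (mexpect (Pn k x) b1 - bbar1) <= a /\
         vnorm (mexpect (Pn k x) b2 - bbar2) <= a]) ->
  (* assumption (A2) *)
  0 < B ->
  (forall s, vnorm (b1 s) <= B /\ vnorm (b2 s) <= B) ->
  (forall s, [/\ opnorm (A11 s) <= 4^-1, opnorm (A12 s) <= 4^-1,
                 opnorm (A21 s) <= 4^-1 & opnorm (A22 s) <= 4^-1]) ->
  (* (Xstar, Ystar) solves the averaged linear system *)
  Abar11 *m Xstar + Abar12 *m Ystar = bbar1 ->
  Abar21 *m Xstar + Abar22 *m Ystar = bbar2 ->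
  (* step sizes: nonnegative, nonincreasing *)
  (forall k, 0 <= alpha k) -> (forall k, alpha k.+1 <= alpha k) ->
  (forall k, 0 <= beta k) -> (forall k, beta k.+1 <= beta k) ->
  (* K* *)
  (0 < Kstar)%N ->
  (forall k, (Kstar <= k)%N ->
     \sum_((k - tau (alpha k))%N <= t < k.+1) alpha t
       <= (tau (alpha k))%:R * alpha (k - tau (alpha k))%N
     /\ (tau (alpha k))%:R * alpha (k - tau (alpha k))%N <= ln 2) ->
  forall k, (Kstar <= k)%N ->
  let XY := tts_iter A11 A12 A21 A22 b1 b2 alpha beta xi X0 Y0 k in
  let X := XY.1 in
  let Y := XY.2 in
  let eps := A11 (xi k) *m X + A12 (xi k) *m Y - b1 (xi k)
             - (Abar11 *m X + Abar12 *m Y - bbar1) in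
  let psi := A21 (xi k) *m X + A22 (xi k) *m Y - b2 (xi k)
             - (Abar21 *m X + Abar22 *m Y - bbar2) in
  let Xhat := X - invmx Abar11 *m (bbar1 - Abar12 *m Y) in
  let Yhat := Y - Ystar in
  let Zhat := col_mx Xhat Yhat in
  let lam1 := smallest_sv Abar11 in
  vnorm (col_mx eps psi)
    <= (8 * lam1 + 1) / (2 * lam1) * vnorm Zhat
       + (8 * lam1 + 1) * (2 * B + vnorm Ystar) / (2 * lam1 ^+ 2).
Proof.
move=> n0 _ _ _ mA11 mA12 mA21 mA22 mb1 mb2 _ _ _ _ _ _ pd11 _ _ _ mix B0 hb hA.
move=> _ _ _ _ _ _ _ _ k _; cbv zeta.
set XY := tts_iter _ _ _ _ _ _ _ _ _ _ _ _.
set X := XY.1; set Y := XY.2; set lam1 := smallest_sv Abar11.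
set x0 := xi 0%N.

have mu1 (j : nat) : Pn j x0 setT = 1%E by exact: prob_kernel.
have Abd (Aq : S -> 'M[R]_n) (Ab : 'M[R]_n) :
    (forall i j, measurable_fun setT (fun s => Aq s i j)) ->
    (forall s, opnorm (Aq s) <= 4^-1) ->
    (forall a, 0 < a -> opnorm (mexpect (Pn (tau a) x0) Aq - Ab) <= a) ->
    forall y, vnorm (Ab *m y) <= 4^-1 * vnorm y.
  move=> mAq hAq hmix y; apply: approx_mat => a a0.
  exists (mexpect (Pn (tau a) x0) Aq); split; last exact: hmix.
  apply: (expect_bound _ (mu1 (tau a)) _ _ (4^-1)) => //.
  - by move=> s i j; apply: le_trans (entry_opnorm _ _ _) (hAq s).
  - by rewrite mulr_ge0 ?vnorm_ge0.
  - move=> s; apply: le_trans (opnorm_mul _ _) _.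
    by rewrite ler_wpM2r ?vnorm_ge0.
have bbd (bq : S -> 'cV[R]_n) (bb : 'cV[R]_n) :
    (forall i j, measurable_fun setT (fun s => bq s i j)) ->
    (forall s, vnorm (bq s) <= B) ->
    (forall a, 0 < a -> vnorm (mexpect (Pn (tau a) x0) bq - bb) <= a) ->
    vnorm bb <= B.
  move=> mbq hbq hmix; apply: approx_vec => a a0.
  exists (mexpect (Pn (tau a) x0) bq); split; last exact: hmix.
  rewrite -[mexpect _ _]mulmx1.
  apply: (expect_bound _ (mu1 (tau a)) _ _ B) => //.
  - by move=> s i j; apply: le_trans (entry_vnorm _ _ _) (hbq s).
  - exact: ltW.
  - by move=> s; rewrite mulmx1.
have hA11 : forall y, vnorm (Abar11 *m y) <= 4^-1 * vnorm y.
  apply: Abd mA11 _ _ => [s|a a0]; [by case: (hA s) | by case: (mix a a0 _ x0 (leqnn _))].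
have hA12 : forall y, vnorm (Abar12 *m y) <= 4^-1 * vnorm y.
  apply: Abd mA12 _ _ => [s|a a0]; [by case: (hA s) | by case: (mix a a0 _ x0 (leqnn _))].
have hA21 : forall y, vnorm (Abar21 *m y) <= 4^-1 * vnorm y.
  apply: Abd mA21 _ _ => [s|a a0]; [by case: (hA s) | by case: (mix a a0 _ x0 (leqnn _))].
have hA22 : forall y, vnorm (Abar22 *m y) <= 4^-1 * vnorm y.
  apply: Abd mA22 _ _ => [s|a a0]; [by case: (hA s) | by case: (mix a a0 _ x0 (leqnn _))].
have hbb1 : vnorm bbar1 <= B.
  apply: bbd mb1 _ _ => [s|a a0]; [by case: (hb s) | by case: (mix a a0 _ x0 (leqnn _)) => _ _ _ _ [] ].
have hbb2 : vnorm bbar2 <= B.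
  apply: bbd mb2 _ _ => [s|a a0]; [by case: (hb s) | by case: (mix a a0 _ x0 (leqnn _)) => _ _ _ _ [] ].
have hAs (Aq : 'M[R]_n) y : opnorm Aq <= 4^-1 -> vnorm (Aq *m y) <= 4^-1 * vnorm y.
  by move=> h; apply: le_trans (opnorm_mul _ _) _; rewrite ler_wpM2r ?vnorm_ge0.
pose e0 : 'cV[R]_n := delta_mx (Ordinal n0) 0.
have he0 : vnorm e0 = 1 by exact: vnorm_delta.
have unit11 : Abar11 \in unitmx.
  apply: inj_unitmx => z hz; apply/eqP/negPn/negP => /pd11.
  by rewrite -mulmxA hz mulmx0 mxE ltxx.
have L0 : 0 < lam1 by exact: (@sv_pos _ _ Abar11 e0 he0 unit11).
have L4 : lam1 <= 4^-1.
  apply: le_trans (@sv_le _ _ Abar11 e0 he0) _; apply: le_trans (hA11 _) _; by rewrite he0 mulr1.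
set W := invmx Abar11 *m (bbar1 - Abar12 *m Y).
have hW : lam1 * vnorm W <= B + 4^-1 * vnorm Y.
  apply: le_trans (sv_lb _ _) _; rewrite /W mulKVmx //.
  by apply: le_trans (vnormB _ _) _; apply: lerD.
have hX : vnorm X <= vnorm (X - W) + vnorm W.
  by have := vnormD (X - W) W; rewrite subrK.
have hY : vnorm Y <= vnorm (Y - Ystar) + vnorm Ystar.
  by have := vnormD (Y - Ystar) Ystar; rewrite subrK.
have hXh : vnorm (X - W) <= vnorm (col_mx (X - W) (Y - Ystar)) by exact: vnorm_colu.
have hYh : vnorm (Y - Ystar) <= vnorm (col_mx (X - W) (Y - Ystar)) by exact: vnorm_cold.
have t3 (u v w : 'cV[R]_n) : vnorm (u + v - w) <= vnorm u + vnorm v + vnorm w.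
  by apply: le_trans (vnormB _ _) _; rewrite lerD2r vnormD.
case: (hA (xi k)) => a11 a12 a21 a22; case: (hb (xi k)) => hb1 hb2.
have heps : vnorm (A11 (xi k) *m X + A12 (xi k) *m Y - b1 (xi k)
             - (Abar11 *m X + Abar12 *m Y - bbar1)) <= 2^-1 * vnorm X + 2^-1 * vnorm Y + 2 * B.
  apply: le_trans (vnormB _ _) _; apply: le_trans (lerD (t3 _ _ _) (t3 _ _ _)) _.
  have := hAs _ X a11; have := hAs _ Y a12; have := hA11 X; have := hA12 Y.
  lra.
have hpsi : vnorm (A21 (xi k) *m X + A22 (xi k) *m Y - b2 (xi k)
             - (Abar21 *m X + Abar22 *m Y - bbar2)) <= 2^-1 * vnorm X + 2^-1 * vnorm Y + 2 * B.
  apply: le_trans (vnormB _ _) _; apply: le_trans (lerD (t3 _ _ _) (t3 _ _ _)) _.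
  have := hAs _ X a21; have := hAs _ Y a22; have := hA21 X; have := hA22 Y.
  lra.
apply: le_trans (vnorm_col_le _ _) _.
set z := vnorm (col_mx _ _) in hXh hYh *.
set ys := vnorm Ystar in hY *.
set u := lam1^-1.
have Lu : lam1 * u = 1 by rewrite mulfV ?gt_eqF.
have u4 : 4 <= u by rewrite -(ler_pM2l L0) Lu; lra.
have e1 : (8 * lam1 + 1) / (2 * lam1) = 4 + u / 2.
  by rewrite /u; field; rewrite gt_eqF.
have e2 : (8 * lam1 + 1) * (2 * B + ys) / (2 * lam1 ^+ 2) = (4 * u + u ^+ 2 / 2) * (2 * B + ys).
  by rewrite /u; field; rewrite gt_eqF.
rewrite e1 e2.
have hw : vnorm W <= u * (B + 4^-1 * vnorm Y).
  by rewrite -(ler_pM2l L0) mulrA Lu mul1r.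
have := vnorm_ge0 W; have := vnorm_ge0 X; have := vnorm_ge0 Y; have := vnorm_ge0 (X - W).
have := vnorm_ge0 (Y - Ystar); have ys0 : 0 <= ys := vnorm_ge0 _.
move: heps hpsi hX hY hXh hYh hw u4 B0.
set a := vnorm (_ - _ - _); set b := vnorm (_ - _ - _).
set w := vnorm W; set xx := vnorm X; set yy := vnorm Y; set xh := vnorm (X - W); set yh := vnorm (Y - Ystar).
move=> *.
nra.
Qed.
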